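(* Let $M\subset\mathbb{R}^2$ be closed, $z\in M$ and $u>0$. Suppose there exist sequences $(z_n)$ in $M$ and $(\rho_n)$ in $(0,\infty)$ such that $z_n\to z$ and, for each $n\in\mathbb{N}$: (i) $z_n\in(z+S^u)\setminus\{z\}$, and (ii) either $(z_n+A^{3u}_{\rho_n})\cap M=\{z_n\}$ or $(z_n-A^{3u}_{\rho_n})\cap M=\{z_n\}$. Then $M\notin\mathcal{D}_2$.
   Context: For $r>0$ and $u>0$: $A^u_r=\{(x,y):0\le x\le r,\ |y|\le ux\}$ and $S^u=\{(x,y):x\in\mathbb{R},\ |y|\le u|x|\}$. A function on an open convex set $C\subset\mathbb{R}^d$ is DC if it is the difference of two convex functions on $C$. $\mathcal{D}_2$ denotes the family consisting of $\varnothing$ together with all nonempty closed sets $A\subset\mathbb{R}^2$ whose distance function $d_A=\operatorname{dist}(\cdot,A)$ is DC on $\mathbb{R}^2$. *)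

(* Defs.v *)
From Stdlib Require Import Reals.
From Coquelicot Require Import Coquelicot.
Open Scope R_scope.

Definition pt := (R * R)%type.

Definition padd (p q : pt) : pt := (fst p + fst q, snd p + snd q).
Definition psub (p q : pt) : pt := (fst p - fst q, snd p - snd q).

Definition edist (p q : pt) : R :=
  sqrt ((fst p - fst q) ^ 2 + (snd p - snd q) ^ 2).

Definition Aset (u r : R) (p : pt) : Prop :=
  0 <= fst p <= r /\ Rabs (snd p) <= u * fst p.

Definition Sset (u : R) (p : pt) : Prop := Rabs (snd p) <= u * Rabs (fst p).

(* distance function d_A(x) = inf_{a in A} |x - a| (meaningful for nonempty A) *)
Definition distfun (A : pt -> Prop) (x : pt) : R :=
  real (Glb_Rbar (fun r => exists a, A a /\ r = edist x a)).

Definition convex2 (f : pt -> R) : Prop :=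
  forall (p q : pt) (t : R), 0 <= t <= 1 ->
    f (t * fst p + (1 - t) * fst q, t * snd p + (1 - t) * snd q)
    <= t * f p + (1 - t) * f q.

Definition DC2 (f : pt -> R) : Prop :=
  exists g h : pt -> R, convex2 g /\ convex2 h /\ forall x, f x = g x - h x.

Definition closed2 (A : pt -> Prop) : Prop := @closed (prod_UniformSpace R_UniformSpace R_UniformSpace) A.

Definition in_D2 (A : pt -> Prop) : Prop :=
  (forall p, ~ A p) \/
  ((exists p, A p) /\ closed2 A /\ DC2 (distfun A)).

(* Main.v *)
Require Import Defs.
From Stdlib Require Import Reals Lra Lia Classical.
From Coquelicot Require Import Coquelicot.
Open Scope R_scope.
Lemma conv_fst (zs : nat -> pt) (z : pt) :
  filterlim zs eventually (@locally (prod_UniformSpace R_UniformSpace R_UniformSpace) z) ->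
  forall eps, 0 < eps -> exists N, forall n, (N <= n)%nat -> Rabs (fst (zs n) - fst z) < eps.
Proof.
  intros H eps He.
  destruct (H _ (locally_ball z (mkposreal eps He))) as [N HN].
  exists N. intros n Hn. specialize (HN n Hn).
  destruct HN as [H1 _]. exact H1.
Qed.

Lemma dist_props (M : pt -> Prop) (x : pt) (a0 : pt) (Ha0 : M a0) :
  (forall a, M a -> distfun M x <= edist x a) /\
  (forall b, (forall a, M a -> b <= edist x a) -> b <= distfun M x).
Proof.
  unfold distfun.
  set (E := fun r => exists a, M a /\ r = edist x a).
  destruct (Glb_Rbar_correct E) as [Hlb Hgr].
  assert (Hb0 : is_lb_Rbar E (Finite 0)).
  { intros r [a [_ ->]]. simpl. unfold edist. apply sqrt_pos. }
  destruct (Glb_Rbar E) as [l| |] eqn:El.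
  - split.
    + intros a Ha. apply (Hlb (edist x a)). exists a; auto.
    + intros b Hb. apply (Hgr (Finite b)). intros r [a [Ha ->]]. simpl. auto.
  - exfalso. specialize (Hlb (edist x a0) (ex_intro _ a0 (conj Ha0 eq_refl))). simpl in Hlb. exact Hlb.
  - exfalso. specialize (Hgr _ Hb0). simpl in Hgr. exact Hgr.
Qed.
Definition Gl (g : pt -> R) z1 z2 w1 w2 t := g (z1 + t*w1, z2 + t*w2).

Lemma Gl0 g z1 z2 w1 w2 : Gl g z1 z2 w1 w2 0 = g (z1, z2).
Proof. unfold Gl. f_equal. f_equal; ring. Qed.

Lemma conv_line g z1 z2 w1 w2 (Hg : convex2 g) a b l : 0 <= l <= 1 ->
  Gl g z1 z2 w1 w2 (l*a + (1-l)*b) <= l * Gl g z1 z2 w1 w2 a + (1-l) * Gl g z1 z2 w1 w2 b.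
Proof.
  intros Hl. unfold Gl.
  pose proof (Hg (z1 + a*w1, z2 + a*w2) (z1 + b*w1, z2 + b*w2) l Hl) as H. simpl in H.
  replace (z1 + (l * a + (1 - l) * b) * w1, z2 + (l * a + (1 - l) * b) * w2)
    with (l * (z1 + a * w1) + (1 - l) * (z1 + b * w1), l * (z2 + a * w2) + (1 - l) * (z2 + b * w2)).
  exact H. f_equal; ring.
Qed.

Lemma div_le a b c d : 0 < b -> 0 < d -> a * d <= c * b -> a / b <= c / d.
Proof.
  intros Hb Hd H. apply Rmult_le_reg_r with (b*d). nra.
  replace (a / b * (b * d)) with (a*d) by (field; lra).
  replace (c / d * (b * d)) with (c*b) by (field; lra). exact H.
Qed.

Lemma three_slope (G : R -> R)
  (HG : forall a b l, 0 <= l <= 1 -> G (l*a + (1-l)*b) <= l * G a + (1-l) * G b)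
  x y w : x < y < w ->
  (G y - G x)/(y - x) <= (G w - G x)/(w - x) /\
  (G w - G x)/(w - x) <= (G w - G y)/(w - y).
Proof.
  intros [Hxy Hyw].
  set (l := (w - y)/(w - x)).
  assert (Hl : 0 <= l <= 1).
  { unfold l; split. apply Rmult_le_pos; [lra|]. left; apply Rinv_0_lt_compat; lra.
    apply Rmult_le_reg_r with (w-x); [lra|]. unfold Rdiv. rewrite Rmult_assoc, Rinv_l; lra. }
  pose proof (HG x w l Hl) as H.
  replace (l * x + (1 - l) * w) with y in H by (unfold l; field; lra).
  assert (H2 : (w - x) * G y <= (w - y) * G x + (y - x) * G w).
  { apply Rmult_le_compat_l with (r := w - x) in H; [|lra].
    replace ((w - x) * (l * G x + (1 - l) * G w)) with ((w - y) * G x + (y - x) * G w) in H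
      by (unfold l; field; lra). exact H. }
  split; apply div_le; nra.
Qed.

Lemma line_convex g z1 z2 w1 w2 (Hg : convex2 g) :
  forall a b l, 0 <= l <= 1 -> Gl g z1 z2 w1 w2 (l*a + (1-l)*b) <= l * Gl g z1 z2 w1 w2 a + (1-l) * Gl g z1 z2 w1 w2 b.
Proof. intros; apply conv_line; auto. Qed.

Definition q g z1 z2 w1 w2 s := (Gl g z1 z2 w1 w2 s - g (z1, z2)) / s.

Lemma q_mono g z1 z2 w1 w2 (Hg : convex2 g) s s' : 0 < s <= s' ->
  q g z1 z2 w1 w2 s <= q g z1 z2 w1 w2 s'.
Proof.
  intros [Hs Hss]. destruct Hss as [Hlt|Heq]; [|subst; lra].
  unfold q. rewrite <- (Gl0 g z1 z2 w1 w2).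
  destruct (three_slope _ (line_convex g z1 z2 w1 w2 Hg) 0 s s') as [H _]; [lra|].
  rewrite !Rminus_0_r in H. exact H.
Qed.

Lemma sub1 g z1 z2 a1 a2 w1 w2 (Hg : convex2 g) s : 0 < s ->
  q g z1 z2 a1 a2 (s/2) <= q g z1 z2 w1 w2 s + q g z1 z2 (a1 - w1) (a2 - w2) s.
Proof.
  intros Hs. unfold q, Gl.
  pose proof (Hg (z1 + s*w1, z2 + s*w2) (z1 + s*(a1-w1), z2 + s*(a2-w2)) (1/2)) as H.
  simpl in H.
  replace (1 / 2 * (z1 + s * w1) + (1 - 1 / 2) * (z1 + s * (a1 - w1)),
           1 / 2 * (z2 + s * w2) + (1 - 1 / 2) * (z2 + s * (a2 - w2)))
    with (z1 + s/2*a1, z2 + s/2*a2) in H by (f_equal; field).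
  assert (H' := H ltac:(lra)).
  set (A := g (z1 + s / 2 * a1, z2 + s / 2 * a2)) in *.
  set (B := g (z1 + s * w1, z2 + s * w2)) in *.
  set (C := g (z1 + s * (a1 - w1), z2 + s * (a2 - w2))) in *.
  set (D := g (z1, z2)).
  replace ((B - D)/s + (C - D)/s) with ((B + C - 2*D)/s) by (field; lra).
  apply div_le; [lra|lra|nra].
Qed.

Lemma sub2 g z1 z2 a1 a2 w1 w2 (Hg : convex2 g) T : 0 < T ->
  q g z1 z2 w1 w2 T <= q g z1 z2 a1 a2 (2*T) + q g z1 z2 (w1 - a1) (w2 - a2) (2*T).
Proof.
  intros Hs. unfold q, Gl.
  pose proof (Hg (z1 + 2*T*a1, z2 + 2*T*a2) (z1 + 2*T*(w1-a1), z2 + 2*T*(w2-a2)) (1/2)) as H.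
  simpl in H.
  replace (1 / 2 * (z1 + 2 * T * a1) + (1 - 1 / 2) * (z1 + 2 * T * (w1 - a1)),
           1 / 2 * (z2 + 2 * T * a2) + (1 - 1 / 2) * (z2 + 2 * T * (w2 - a2)))
    with (z1 + T*w1, z2 + T*w2) in H by (f_equal; field).
  assert (H' := H ltac:(lra)).
  set (A := g (z1 + T * w1, z2 + T * w2)) in *.
  set (B := g (z1 + 2 * T * a1, z2 + 2 * T * a2)) in *.
  set (C := g (z1 + 2 * T * (w1 - a1), z2 + 2 * T * (w2 - a2))) in *.
  set (D := g (z1, z2)).
  replace ((B - D)/(2*T) + (C - D)/(2*T)) with ((B + C - 2*D)/(2*T)) by (field; lra).
  apply div_le; [lra|lra|nra].
Qed.

Lemma vert g z1 z2 (Hg : convex2 g) k s : 0 < s -> s * Rabs k <= 1 ->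
  q g z1 z2 0 k s <= (Rmax (g (z1, z2 + 1)) (g (z1, z2 - 1)) - g (z1, z2)) * Rabs k.
Proof.
  intros Hs Hk.
  destruct (Req_dec k 0) as [->|Hk0].
  - unfold q, Gl. replace (z1 + s*0, z2 + s*0) with (z1, z2) by (f_equal; ring).
    rewrite Rabs_R0. unfold Rdiv. lra.
  - assert (Ha : 0 < Rabs k) by (apply Rabs_pos_lt; auto).
    apply Rle_trans with (q g z1 z2 0 k (/ Rabs k)).
    + apply q_mono; auto. split; auto.
      apply Rmult_le_reg_r with (Rabs k); auto. rewrite Rinv_l; lra.
    + unfold q, Gl.
      replace (z1 + / Rabs k * 0, z2 + / Rabs k * k) with (z1, z2 + k / Rabs k) by (f_equal; field; lra).
      assert (E : g (z1, z2 + k / Rabs k) <= Rmax (g (z1, z2 + 1)) (g (z1, z2 - 1))).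
      { destruct (Rle_or_lt 0 k) as [Hp|Hn].
        - rewrite Rabs_pos_eq by lra. replace (k/k) with 1 by (field; lra). apply Rmax_l.
        - rewrite Rabs_left by lra. replace (k / - k) with (-1) by (field; lra).
          replace (z2 + -1) with (z2 - 1) by ring. apply Rmax_r. }
      unfold Rdiv. rewrite Rinv_inv. nra.
Qed.

Lemma q_lb g z1 z2 w1 w2 (Hg : convex2 g) s : 0 < s <= 1 ->
  - q g z1 z2 (-w1) (-w2) 1 <= q g z1 z2 w1 w2 s.
Proof.
  intros Hs.
  pose proof (Hg (z1 + s*w1, z2 + s*w2) (z1 + s*(-w1), z2 + s*(-w2)) (1/2) ltac:(lra)) as H.
  simpl in H.
  replace (1 / 2 * (z1 + s * w1) + (1 - 1 / 2) * (z1 + s * - w1),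
           1 / 2 * (z2 + s * w2) + (1 - 1 / 2) * (z2 + s * - w2)) with (z1, z2) in H by (f_equal; field).
  assert (H2 : q g z1 z2 (-w1) (-w2) s <= q g z1 z2 (-w1) (-w2) 1) by (apply q_mono; auto; lra).
  assert (H3 : 0 <= q g z1 z2 w1 w2 s + q g z1 z2 (-w1) (-w2) s).
  { unfold q, Gl. replace ((g (z1 + s * w1, z2 + s * w2) - g (z1, z2)) / s +
      (g (z1 + s * - w1, z2 + s * - w2) - g (z1, z2)) / s) with
      ((g (z1 + s * w1, z2 + s * w2) + g (z1 + s * - w1, z2 + s * - w2) - 2 * g (z1, z2)) / s)
      by (field; lra).
    apply Rmult_le_pos; [lra|]. left; apply Rinv_0_lt_compat; lra. }
  lra.
Qed.

Lemma inf_lemma (f : R -> R) (Lb : R)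
  (Hmono : forall s s', 0 < s <= s' -> s' <= 1 -> f s <= f s')
  (Hlb : forall s, 0 < s <= 1 -> Lb <= f s) :
  forall eps, 0 < eps -> exists s0, 0 < s0 <= 1 /\
    forall s s', 0 < s <= s0 -> 0 < s' <= s0 -> f s' <= f s + eps.
Proof.
  intros eps He.
  set (E := fun x => exists s, 0 < s <= 1 /\ x = - f s).
  destruct (completeness E) as [l [Hub Hlub]].
  { exists (- Lb). intros x [s [Hs ->]]. specialize (Hlb s Hs). lra. }
  { exists (- f 1). exists 1. split; [lra|auto]. }
  destruct (classic (exists s0, 0 < s0 <= 1 /\ l - eps < - f s0)) as [[s0 [Hs0 Hlt]]|Hno].
  - exists s0. split; auto. intros s s' Hs Hs'.
    assert (H1 : f s' <= f s0) by (apply Hmono; lra).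
    assert (H2 : - f s <= l) by (apply Hub; exists s; split; [lra|auto]).
    lra.
  - exfalso. assert (Hub' : is_upper_bound E (l - eps)).
    { intros x [s [Hs ->]]. destruct (Rle_or_lt (- f s) (l - eps)) as [H|H]; auto.
      exfalso; apply Hno; exists s; auto. }
    specialize (Hlub _ Hub'). lra.
Qed.

Lemma cluster (m : nat -> R) (u : R) (Hm : forall n, Rabs (m n) <= u) :
  exists l, forall d, 0 < d -> forall N, exists n, (N <= n)%nat /\ Rabs (m n - l) < d.
Proof.
  set (E := fun x => forall N, exists n, (N <= n)%nat /\ x <= m n).
  destruct (completeness E) as [l [Hub Hlub]].
  { exists u. intros x Hx. destruct (Hx 0%nat) as [n [_ Hn]].
    specialize (Hm n). apply Rabs_le_between in Hm || (destruct (Rabs_def2b _ _ Hm); idtac).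
    pose proof (Rle_abs (m n)). lra. }
  { exists (- u). intros N. exists N. split; auto. pose proof (Hm N).
    pose proof (Rabs_le_between (m N) u) as [H1 _]. specialize (H1 H). lra. }
  exists l. intros d Hd N.
  assert (HN1 : exists N1, forall n, (N1 <= n)%nat -> m n < l + d/2).
  { destruct (classic (E (l + d/2))) as [HE|HE].
    - specialize (Hub _ HE). lra.
    - apply not_all_ex_not in HE. destruct HE as [N1 HN1]. exists N1. intros n Hn.
      destruct (Rlt_or_le (m n) (l + d/2)) as [H|H]; auto.
      exfalso; apply HN1; exists n; auto. }
  destruct HN1 as [N1 HN1].
  assert (Hx : exists x, E x /\ l - d < x).
  { apply NNPP. intros Hno.
    assert (Hub' : is_upper_bound E (l - d)).
    { intros x Hx. destruct (Rle_or_lt x (l - d)) as [H|H]; auto.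
      exfalso; apply Hno; exists x; auto. }
    specialize (Hlub _ Hub'). lra. }
  destruct Hx as [x [Hx Hlt]].
  destruct (Hx (max N N1)) as [n [Hn Hxn]].
  exists n. split. lia.
  assert (m n < l + d/2) by (apply HN1; lia).
  apply Rabs_def1; lra.
Qed.
Lemma edist_ge p a : Rabs (fst p - fst a) <= edist p a /\ Rabs (snd p - snd a) <= edist p a.
Proof.
  unfold edist. split.
  - rewrite <- (sqrt_pow2 (Rabs (fst p - fst a))) by apply Rabs_pos.
    apply sqrt_le_1_alt. rewrite pow2_abs.
    pose proof (pow2_ge_0 (snd p - snd a)). lra.
  - rewrite <- (sqrt_pow2 (Rabs (snd p - snd a))) by apply Rabs_pos.
    apply sqrt_le_1_alt. rewrite pow2_abs.
    pose proof (pow2_ge_0 (fst p - fst a)). lra.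
Qed.

Lemma core u m tau rho X Y : 0 < u -> Rabs m <= u -> 0 < tau -> tau <= rho/2 ->
  ~ (0 <= X <= rho /\ Rabs Y <= 3 * u * X) ->
  Rmin (1/2) (u/2) * tau <= Rabs (X - tau) \/ Rmin (1/2) (u/2) * tau <= Rabs (Y - tau * m).
Proof.
  intros Hu Hm Ht Hr HA.
  assert (Hc1 : Rmin (1/2) (u/2) <= 1/2) by apply Rmin_l.
  assert (Hc2 : Rmin (1/2) (u/2) <= u/2) by apply Rmin_r.
  destruct (Rle_or_lt (tau/2) (Rabs (X - tau))) as [H|H].
  - left. nra.
  - right. apply Rabs_def2 in H. destruct H as [H1 H2].
    assert (HY : 3 * u * X < Rabs Y).
    { destruct (Rlt_or_le (3*u*X) (Rabs Y)) as [h|h]; auto. exfalso; apply HA; split; [lra|auto]. }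
    assert (Hm' : Rabs (tau * m) <= u * tau).
    { rewrite Rabs_mult, Rabs_pos_eq by lra. nra. }
    pose proof (Rabs_triang_inv Y (tau * m)). nra.
Qed.

Lemma kink (M : pt -> Prop) a1 a2 u m tau rho :
  M (a1, a2) -> 0 < u -> Rabs m <= u -> 0 < tau -> tau <= rho/2 ->
  ((forall p, (Aset (3 * u) rho (psub p (a1, a2)) /\ M p) <-> p = (a1, a2)) \/
   (forall p, (Aset (3 * u) rho (psub (a1, a2) p) /\ M p) <-> p = (a1, a2))) ->
  Rmin (1/2) (u/2) * tau <= distfun M (a1 + tau, a2 + tau * m) + distfun M (a1 - tau, a2 - tau * m).
Proof.
  intros HMa Hu Hm Ht Hr Hcase.
  assert (Hc1 : Rmin (1/2) (u/2) <= 1/2) by apply Rmin_l.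
  assert (Hd0 : forall x, 0 <= distfun M x).
  { intros x. apply (proj2 (dist_props M x _ HMa)). intros a _. unfold edist; apply sqrt_pos. }
  destruct Hcase as [Hp|Hp].
  - cut (Rmin (1/2) (u/2) * tau <= distfun M (a1 + tau, a2 + tau * m)).
    { pose proof (Hd0 (a1 - tau, a2 - tau * m)). lra. }
    apply (proj2 (dist_props M _ _ HMa)). intros [b1 b2] Hb.
    destruct (edist_ge (a1 + tau, a2 + tau * m) (b1, b2)) as [E1 E2]. simpl in E1, E2.
    destruct (classic ((b1, b2) = (a1, a2))) as [Heq|Hne].
    + injection Heq as -> ->. replace (a1 + tau - a1) with tau in E1 by ring.
      rewrite Rabs_pos_eq in E1 by lra. nra.
    + assert (HA : ~ (0 <= b1 - a1 <= rho /\ Rabs (b2 - a2) <= 3 * u * (b1 - a1))).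
      { intros HA. apply Hne. apply (Hp (b1, b2)). split; [|auto]. unfold Aset, psub. simpl. exact HA. }
      destruct (core u m tau rho _ _ Hu Hm Ht Hr HA) as [h|h].
      * replace (b1 - a1 - tau) with (-(a1 + tau - b1)) in h by ring. rewrite Rabs_Ropp in h. lra.
      * replace (b2 - a2 - tau * m) with (-(a2 + tau * m - b2)) in h by ring. rewrite Rabs_Ropp in h. lra.
  - cut (Rmin (1/2) (u/2) * tau <= distfun M (a1 - tau, a2 - tau * m)).
    { pose proof (Hd0 (a1 + tau, a2 + tau * m)). lra. }
    apply (proj2 (dist_props M _ _ HMa)). intros [b1 b2] Hb.
    destruct (edist_ge (a1 - tau, a2 - tau * m) (b1, b2)) as [E1 E2]. simpl in E1, E2.
    destruct (classic ((b1, b2) = (a1, a2))) as [Heq|Hne].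
    + injection Heq as -> ->. replace (a1 - tau - a1) with (- tau) in E1 by ring.
      rewrite Rabs_Ropp, Rabs_pos_eq in E1 by lra. nra.
    + assert (HA : ~ (0 <= a1 - b1 <= rho /\ Rabs (a2 - b2) <= 3 * u * (a1 - b1))).
      { intros HA. apply Hne. apply (Hp (b1, b2)). split; [|auto]. unfold Aset, psub. simpl. exact HA. }
      destruct (core u m tau rho _ _ Hu Hm Ht Hr HA) as [h|h].
      * replace (a1 - b1 - tau) with (a1 - tau - b1) in h by ring. lra.
      * replace (a2 - b2 - tau * m) with (a2 - tau * m - b2) in h by ring. lra.
Qed.
Lemma q_inf g z1 z2 w1 w2 (Hg : convex2 g) eps : 0 < eps -> exists s0, 0 < s0 <= 1 /\
    forall s s', 0 < s <= s0 -> 0 < s' <= s0 -> q g z1 z2 w1 w2 s' <= q g z1 z2 w1 w2 s + eps.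
Proof.
  apply (inf_lemma _ (- q g z1 z2 (-w1) (-w2) 1)).
  - intros s s' Hs _. apply q_mono; auto.
  - intros s Hs. apply q_lb; auto.
Qed.

Lemma final g h z1 z2 w1 w2 a1 a2 k c Bc eps del s0 s sig tau
  (Hg : convex2 g) (Hh : convex2 h)
  (HBc : Bc = Rmax (g (z1, z2 + 1)) (g (z1, z2 - 1)) - g (z1, z2))
  (Hw1 : w1 = a1) (Hw2 : w2 = a2 + k)
  (Hc : 0 < c) (Heps : eps = c / 8) (Hdel : 0 <= del <= 1) (HdB : 2 * Rabs Bc * del <= c / 8)
  (Hk : Rabs k <= del)
  (Htau : 0 < tau < s) (Hssig : s <= sig) (Hs0 : 2 * (s + sig) <= s0) (Hs01 : s0 <= 1)
  (Hinf : forall s s', 0 < s <= s0 -> 0 < s' <= s0 -> q g z1 z2 a1 a2 s' <= q g z1 z2 a1 a2 s + eps)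
  (Hkink : c * tau <= (Gl g z1 z2 w1 w2 (s + tau) - Gl h z1 z2 w1 w2 (s + tau))
                    + (Gl g z1 z2 w1 w2 (s - tau) - Gl h z1 z2 w1 w2 (s - tau)))
  (HD0 : Gl g z1 z2 w1 w2 s - Gl h z1 z2 w1 w2 s = 0) : False.
Proof.
  set (G := Gl g z1 z2 w1 w2) in *. set (H := Gl h z1 z2 w1 w2) in *.
  assert (HH : H s <= 1/2 * H (s + tau) + (1 - 1/2) * H (s - tau)).
  { pose proof (conv_line h z1 z2 w1 w2 Hh (s + tau) (s - tau) (1/2) ltac:(lra)) as X.
    replace (1 / 2 * (s + tau) + (1 - 1 / 2) * (s - tau)) with s in X by field. exact X. }
  assert (Hsec : c * tau <= G (s + tau) + G (s - tau) - 2 * G s) by lra.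
  destruct (three_slope G (line_convex g z1 z2 w1 w2 Hg) s (s + tau) (s + sig)) as [S1 _]; [lra|].
  destruct (three_slope G (line_convex g z1 z2 w1 w2 Hg) 0 (s - tau) s) as [_ S2]; [lra|].
  replace (s + tau - s) with tau in S1 by ring. replace (s + sig - s) with sig in S1 by ring.
  replace (s - 0) with s in S2 by ring. replace (s - (s - tau)) with tau in S2 by ring.
  assert (Hc1 : c <= (G (s + tau) - G s) / tau - (G s - G (s - tau)) / tau).
  { replace ((G (s + tau) - G s) / tau - (G s - G (s - tau)) / tau) with
      ((G (s + tau) + G (s - tau) - 2 * G s) / tau) by (field; lra).
    apply Rmult_le_reg_r with tau; [lra|]. unfold Rdiv. rewrite Rmult_assoc, Rinv_l; lra. }
  set (T := s + sig).
  set (qT := q g z1 z2 w1 w2 T). set (qs := q g z1 z2 w1 w2 s).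
  assert (Hid : (G T - G s) / sig - (G s - G 0) / (s - 0) = (T / sig) * (qT - qs)).
  { unfold qT, qs, q. fold G. rewrite <- (Gl0 g z1 z2 w1 w2). fold G. unfold T. field. lra. }
  replace (s - 0) with s in Hid by ring.
  assert (Hc2 : c <= (T / sig) * (qT - qs)) by (fold T in S1; lra).
  assert (HX0 : qs <= qT) by (apply q_mono; auto; unfold T; lra).
  assert (Hr : T / sig <= 2).
  { apply Rmult_le_reg_r with sig; [lra|]. unfold Rdiv. rewrite Rmult_assoc, Rinv_l; [|lra]. unfold T; lra. }
  assert (Hr0 : 0 <= T / sig).
  { apply Rmult_le_pos; [unfold T; lra|]. left; apply Rinv_0_lt_compat; lra. }
  assert (HqT : qT <= q g z1 z2 a1 a2 (2*T) + q g z1 z2 0 k (2*T)).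
  { unfold qT. pose proof (sub2 g z1 z2 a1 a2 w1 w2 Hg T ltac:(unfold T; lra)) as X.
    replace (w1 - a1) with 0 in X by lra. replace (w2 - a2) with k in X by lra. exact X. }
  assert (Hqs : q g z1 z2 a1 a2 (s/2) <= qs + q g z1 z2 0 (-k) s).
  { unfold qs. pose proof (sub1 g z1 z2 a1 a2 w1 w2 Hg s ltac:(lra)) as X.
    replace (a1 - w1) with 0 in X by lra. replace (a2 - w2) with (-k) in X by lra. exact X. }
  assert (Hka : 0 <= Rabs k) by apply Rabs_pos.
  assert (V1 : q g z1 z2 0 k (2*T) <= Bc * Rabs k).
  { rewrite HBc. apply vert; auto. unfold T; lra. unfold T; nra. }
  assert (V2 : q g z1 z2 0 (-k) s <= Bc * Rabs k).
  { rewrite <- (Rabs_Ropp k). rewrite HBc. apply vert; auto. lra. rewrite Rabs_Ropp. nra. }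
  assert (HB : Bc * Rabs k <= Rabs Bc * del).
  { pose proof (Rle_abs Bc). pose proof (Rabs_pos Bc). nra. }
  assert (Hi : q g z1 z2 a1 a2 (2*T) <= q g z1 z2 a1 a2 (s/2) + eps).
  { apply Hinf; unfold T; lra. }
  assert (HX : qT - qs <= c / 4) by lra.
  nra.
Qed.

Theorem lemma4p3 (M : pt -> Prop) (z : pt) (u : R)
  (HM : closed2 M) (Hz : M z) (Hu : 0 < u)
  (zs : nat -> pt) (rho : nat -> R)
  (HzsM : forall n, M (zs n))
  (Hrho : forall n, 0 < rho n)
  (Hlim : filterlim zs eventually (@locally (prod_UniformSpace R_UniformSpace R_UniformSpace) z))
  (Hcone : forall n, Sset u (psub (zs n) z) /\ zs n <> z)
  (Hempty : forall n,
     (forall p, (Aset (3 * u) (rho n) (psub p (zs n)) /\ M p) <-> p = zs n) \/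
     (forall p, (Aset (3 * u) (rho n) (psub (zs n) p) /\ M p) <-> p = zs n)) :
  ~ in_D2 M.
Proof.
  intros HD. destruct HD as [Hemp | [_ [_ [g [h [Hg [Hh Hd]]]]]]].
  { exact (Hemp z Hz). }
  pose proof (conv_fst zs z Hlim) as Hconv.
  destruct z as [z1 z2]. simpl in Hconv.
  set (x := fun n => fst (zs n) - z1). set (y := fun n => snd (zs n) - z2).
  assert (Hxy : forall n, Rabs (y n) <= u * Rabs (x n) /\ x n <> 0).
  { intros n. destruct (Hcone n) as [HS Hne]. unfold Sset, psub in HS. simpl in HS.
    split; [exact HS|]. intros H0. apply Hne. unfold x in H0.
    assert (Hy0 : Rabs (y n) <= 0).
    { unfold x in HS. rewrite H0, Rabs_R0 in HS. unfold y. lra. }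
    pose proof (Rabs_pos (y n)). assert (Rabs (y n) = 0) by lra.
    apply Rabs_eq_0 in H1. unfold y in H1.
    destruct (zs n) as [p1 p2]. simpl in *. f_equal; lra. }
  set (mm := fun n => y n / x n).
  assert (Hyx : forall n, y n = mm n * x n).
  { intros n. unfold mm. field. apply Hxy. }
  assert (Hmm : forall n, Rabs (mm n) <= u).
  { intros n. destruct (Hxy n) as [H1 H2]. rewrite Hyx, Rabs_mult in H1.
    assert (0 < Rabs (x n)) by (apply Rabs_pos_lt; auto).
    apply Rmult_le_reg_r with (Rabs (x n)); auto. }
  destruct (cluster mm u Hmm) as [l Hl].
  set (c := Rmin (1/2) (u/2)).
  assert (Hc : 0 < c) by (unfold c, Rmin; destruct Rle_dec; lra).
  set (Bc := Rmax (g (z1, z2 + 1)) (g (z1, z2 - 1)) - g (z1, z2)).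
  destruct (q_inf g z1 z2 1 l Hg (c/8) ltac:(lra)) as [s0p [Hs0p Hinfp]].
  destruct (q_inf g z1 z2 (-1) (-l) Hg (c/8) ltac:(lra)) as [s0m [Hs0m Hinfm]].
  set (s0 := Rmin s0p s0m).
  assert (Hs0 : 0 < s0 <= 1 /\ s0 <= s0p /\ s0 <= s0m).
  { unfold s0, Rmin; destruct Rle_dec; lra. }
  set (del := Rmin 1 (c / (16 * (Rabs Bc + 1)))).
  assert (HBa : 0 <= Rabs Bc) by apply Rabs_pos.
  assert (Hdel : 0 < del <= 1 /\ del * (16 * (Rabs Bc + 1)) <= c).
  { unfold del, Rmin. destruct Rle_dec as [Hle|Hlt].
    - split; [lra|]. apply Rle_trans with (c / (16 * (Rabs Bc + 1)) * (16 * (Rabs Bc + 1))).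
      apply Rmult_le_compat_r; lra. right; field; lra.
    - split. split; [|lra]. apply Rdiv_lt_0_compat; lra. right; field; lra. }
  assert (HdB : 2 * Rabs Bc * del <= c / 8) by nra.
  destruct Hdel as [[Hdel1 Hdel2] Hdel3].
  destruct (Hconv (s0/4) ltac:(lra)) as [N0 HN0].
  destruct (Hl del ltac:(lra) N0) as [n [Hn Hmn]].
  specialize (HN0 n Hn). fold (x n) in HN0.
  destruct (Hxy n) as [_ Hx0].
  assert (Hzn : zs n = (z1 + x n, z2 + mm n * x n)).
  { rewrite <- Hyx. unfold x, y. destruct (zs n); simpl; f_equal; ring. }
  pose proof (HzsM n) as HMn. pose proof (Hempty n) as Hcase. rewrite Hzn in HMn, Hcase.
  set (s := Rabs (x n)).
  assert (Hs : 0 < s) by (apply Rabs_pos_lt; auto).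
  set (tau := Rmin s (rho n / 2) / 2).
  pose proof (Hrho n) as Hrn.
  assert (Htau : 0 < tau < s /\ tau <= rho n / 2).
  { unfold tau, Rmin; destruct Rle_dec; lra. }
  pose proof (kink M _ _ u (mm n) tau (rho n) HMn Hu (Hmm n) (proj1 (proj1 Htau)) (proj2 Htau) Hcase) as Hk.
  fold c in Hk.
  assert (HDz : distfun M (z1 + x n, z2 + mm n * x n) = 0).
  { destruct (dist_props M (z1 + x n, z2 + mm n * x n) _ HMn) as [A B].
    specialize (A _ HMn). specialize (B 0).
    assert (E0 : forall p, edist p p = 0).
    { intros [p1 p2]. unfold edist. cbn [fst snd]. replace ((p1 - p1) ^ 2 + (p2 - p2) ^ 2) with 0 by ring. apply sqrt_0. }
    rewrite E0 in A. assert (0 <= distfun M (z1 + x n, z2 + mm n * x n)).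
    { apply B. intros a _. unfold edist; apply sqrt_pos. } lra. }
  assert (HGl : forall w1 w2 t, Gl g z1 z2 w1 w2 t - Gl h z1 z2 w1 w2 t = distfun M (z1 + t * w1, z2 + t * w2)).
  { intros. unfold Gl. rewrite Hd. ring. }
  assert (Hk1 : Rabs (mm n - l) <= del) by lra.
  assert (Hss : s <= s0/4) by (unfold s; lra).
  assert (Hs0b : 2 * (s + s0/4) <= s0) by lra.
  destruct (Rlt_or_le 0 (x n)) as [Hpos|Hneg].
  - assert (Es : s = x n) by (unfold s; rewrite Rabs_pos_eq; lra).
    apply (final g h z1 z2 1 (mm n) 1 l (mm n - l) c Bc (c/8) del s0 s (s0/4) tau Hg Hh eq_refl
             eq_refl ltac:(ring) Hc eq_refl ltac:(lra) HdB ltac:(lra) (proj1 Htau) ltac:(lra) ltac:(lra) ltac:(lra)).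
    + intros a b Ha Hb. apply Hinfp; lra.
    + rewrite !HGl.
      replace (z1 + (s + tau) * 1, z2 + (s + tau) * mm n) with (z1 + x n + tau, z2 + mm n * x n + tau * mm n)
        by (rewrite Es; f_equal; ring).
      replace (z1 + (s - tau) * 1, z2 + (s - tau) * mm n) with (z1 + x n - tau, z2 + mm n * x n - tau * mm n)
        by (rewrite Es; f_equal; ring). exact Hk.
    + rewrite HGl. rewrite <- HDz. f_equal. rewrite Es; f_equal; ring.
  - assert (Es : s = - x n) by (unfold s; rewrite Rabs_left; lra).
    apply (final g h z1 z2 (-1) (- mm n) (-1) (-l) (-(mm n - l)) c Bc (c/8) del s0 s (s0/4) tau Hg Hh eq_refl
             eq_refl ltac:(ring) Hc eq_refl ltac:(lra) HdB ltac:(rewrite Rabs_Ropp; lra) (proj1 Htau) ltac:(lra) ltac:(lra) ltac:(lra)).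
    + intros a b Ha Hb. apply Hinfm; lra.
    + rewrite !HGl.
      replace (z1 + (s + tau) * -1, z2 + (s + tau) * - mm n) with (z1 + x n - tau, z2 + mm n * x n - tau * mm n)
        by (rewrite Es; f_equal; ring).
      replace (z1 + (s - tau) * -1, z2 + (s - tau) * - mm n) with (z1 + x n + tau, z2 + mm n * x n + tau * mm n)
        by (rewrite Es; f_equal; ring). lra.
    + rewrite HGl. rewrite <- HDz. f_equal. rewrite Es; f_equal; ring.
Qed.
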